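(* Let $S$ be an $\mathcal L$-definable set and $n\ge 1$. Let $\Delta_n=\{(\lambda,\dots,\lambda)\in\mathbb Z^n:\lambda\in\mathbb N\}$ (with $\mathbb N=\{0,1,2,\dots\}$). Then in the ring $R_S$, $$(p^n-1)\cdot[P(S\times\Delta_n)]=1.$$
   Context: Fix a prime $p$. $\mathcal L=\{+,\cdot,\mathcal O\}$ is the language of valued fields (ring operations and a unary predicate interpreted as the valuation ring $\mathbb Z_p$). An $\mathcal L$-definable set is a subset of some $\mathbb Q_p^n$ defined by a parameter-free $\mathcal L$-formula; a function is $\mathcal L$-definable if its graph is. $\mu$ denotes the Haar measure on $\mathbb Q_p^n$ normalized so that $\mu(\mathbb Z_p^n)=1$. For $X\subseteq S\times\mathbb Q_p^n$ and $s\in S$ write $X_s=\{x\in\mathbb Q_p^n:(s,x)\in X\}$. Definition of $R_S$: $R_S$ is the abelian group generated by symbols $[X]$, for all $\mathcal L$-definable $X\subseteq S\times\mathbb Q_p^n$ ($n\ge 0$ arbitrary) such that $\mu(X_s)<\infty$ for all $s\in S$, modulo the relations: (R1) $[X_1\cup X_2]=[X_1]+[X_2]$ for disjoint such $X_1,X_2\subseteq S\times\mathbb Q_p^n$; (R2) $[X]=0$ whenever $X\subseteq S\times\mathbb Q_p^n$ and $\dim X_s<n$ for every $s\in S$; (R3) $[X]=[Y]$ whenever $X,Y\subseteq S\times\mathbb Q_p^n$ and there is an $\mathcal L$-definable bijection $\phi:X\to Y$ inducing for each $s\in S$ a bijection $\phi_s:X_s\to Y_s$ such that $X_s,Y_s$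 are open in $\mathbb Q_p^n$, $\phi_s$ is $C^1$, and the $p$-adic norm of the Jacobian determinant of $\phi_s$ equals $1$ everywhere; (R4) $[X]=[X\times\mathbb Z_p]$ for every such $X$. $R_S$ is a commutative ring with unit $1=[S\times\mathbb Z_p]$ and multiplication $[X]\cdot[Y]=[X\times_S Y]$, where $X\times_S Y=\{(s,x,y): s\in S, x\in X_s, y\in Y_s\}$; integers are identified with their images in $R_S$. Angular component: for $x\in\mathbb Q_p^\times$, $\mathrm{ac}(x)=xp^{-v(x)}\bmod p\mathbb Z_p\in\mathbb F_p$, and $\mathrm{ac}(0)=0$; $v$ is the $p$-adic valuation, and $v(x)=(v(x_1),\dots,v(x_n))$ for tuples. For $\Lambda\subseteq S\times\mathbb Z^n$ (definable after identifying $\mathbb Z$ with the value group), $P(\Lambda)\subseteq S\times\mathbb Q_p^n$ is given by $P(\Lambda)_s=\{x\in\mathbb Q_p^n:\mathrm{ac}(x_1)=\dots=\mathrm{ac}(x_n)=1,\ v(x)\in\Lambda_s\}$. *)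

(* Defs.v *)
From HB Require Import structures.
From mathcomp Require Import all_boot all_order all_algebra.
From Stdlib Require Import ClassicalEpsilon.
Set Implicit Arguments. Unset Strict Implicit. Unset Printing Implicit Defensive.
Import Order.TTheory GRing.Theory Num.Theory.
Local Open Scope ring_scope.

Section Padic.
Variable p : nat.
Variable K : fieldType.
Variable v : K -> int.   (* the valuation; the value at 0 is irrelevant *)

(* "v(x) >= k", with v(0) = +oo *)
Definition vge (x : K) (k : int) : Prop := x = 0 \/ k <= v x.

(* (K, v) is (isomorphic to) Q_p with its p-adic valuation:
   a complete discretely valued field, v(p) = 1, residue field F_p. *)
Definition is_Qp : Prop :=
  [/\ (forall x y, x != 0 -> y != 0 -> v (x * y) = v x + v y),
      (forall x y, x != 0 -> y != 0 -> x + y != 0 ->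
          (v x <= v (x + y)) || (v y <= v (x + y))),
      (p%:R : K) != 0 /\ v p%:R = 1,
      (forall x, vge x 0 -> exists k : nat, vge (x - k%:R) 1) &
      (forall u : nat -> K,
         (forall N : int, exists M : nat, forall i j, (M <= i)%N -> (M <= j)%N ->
              vge (u i - u j) N) ->
         exists l : K, forall N : int, exists M : nat, forall i, (M <= i)%N ->
              vge (u i - l) N)].

Definition inO (x : K) : Prop := vge x 0.

Definition ac_one (x : K) : Prop := x != 0 /\ vge (x * (p%:R : K) ^ (- v x) - 1) 1.

Inductive term : Type :=
  | TVar of nat | TZero | TOne | TAdd of term & term | TMul of term & term
  | TNeg of term.
Inductive formula : Type :=
  | FEq of term & term | FO of term | FNot of formula
  | FAnd of formula & formula | FEx of nat & formula.

Fixpoint teval (e : nat -> K) (t : term) : K :=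
  match t with
  | TVar i => e i | TZero => 0 | TOne => 1
  | TAdd a b => teval e a + teval e b
  | TMul a b => teval e a * teval e b
  | TNeg a => - teval e a
  end.

Definition upd (e : nat -> K) (i : nat) (a : K) : nat -> K :=
  fun j => if j == i then a else e j.

Fixpoint sat (e : nat -> K) (f : formula) : Prop :=
  match f with
  | FEq a b => teval e a = teval e b
  | FO a => inO (teval e a)
  | FNot g => ~ sat e g
  | FAnd g h => sat e g /\ sat e h
  | FEx i g => exists a : K, sat (upd e i a) g
  end.

Definition env_of (k : nat) (x : 'rV[K]_k) : nat -> K :=
  fun i => match insub i with Some j => x 0 j | None => 0 end.

Definition definable (k : nat) (X : 'rV[K]_k -> Prop) : Prop :=
  exists f : formula, forall x, X x <-> sat (env_of x) f.

Definition definable2 (m k : nat) (X : 'rV[K]_m -> 'rV[K]_k -> Prop) : Prop :=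
  definable (fun z : 'rV[K]_(m + k) => X (lsubmx z) (rsubmx z)).

Definition vnorm_ge (k : nat) (x : 'rV[K]_k) (e : int) : Prop :=
  forall j, vge (x 0 j) e.
Definition ball (k : nat) (a : 'rV[K]_k) (e : int) (x : 'rV[K]_k) : Prop :=
  vnorm_ge (x - a) e.

Definition open_set (k : nat) (A : 'rV[K]_k -> Prop) : Prop :=
  forall x, A x -> exists e, forall y, ball x e y -> A y.

(* mu(A) < oo for the Haar measure mu normalised by mu(Z_p^k) = 1:
   A can be covered by countably many balls a_i + p^{e_i} Z_p^k
   (of measure p^{-k e_i}) with finite total measure *)
Definition fin_meas (k : nat) (A : 'rV[K]_k -> Prop) : Prop :=
  exists (a : nat -> 'rV[K]_k) (e : nat -> int),
    (forall x, A x -> exists i, ball (a i) (e i) x) /\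
    exists B : rat, forall N : nat,
      \sum_(i < N) (p%:Q) ^ (- ((k%:Z) * e i)) <= B.

(* dim A < k, with dim A = max d such that some coordinate projection
   K^k -> K^d has image with nonempty interior *)
Definition dim_lt (k : nat) (A : 'rV[K]_k -> Prop) : Prop :=
  forall (d : nat) (f : 'I_d -> 'I_k), injective f ->
    (exists (a : 'rV[K]_d) (e : int), forall y, ball a e y ->
        exists x, A x /\ forall i, x 0 (f i) = y 0 i) ->
    (d < k)%N.

Definition diff_at (k : nat) (X : 'rV[K]_k -> Prop) (f : 'rV[K]_k -> 'rV[K]_k)
    (x : 'rV[K]_k) (L : 'M[K]_k) : Prop :=
  forall N : int, exists M : int, forall h : 'rV[K]_k, X (x + h) -> vnorm_ge h M ->
    forall t : int, vnorm_ge h t -> vnorm_ge (f (x + h) - f x - h *m L) (t + N).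

Definition C1_jac1 (k : nat) (X : 'rV[K]_k -> Prop) (f : 'rV[K]_k -> 'rV[K]_k) : Prop :=
  exists J : 'rV[K]_k -> 'M[K]_k,
    [/\ forall x, X x -> diff_at X f x (J x),
        forall x, X x -> forall N : int, exists M : int, forall y, X y ->
            vnorm_ge (y - x) M -> forall i j, vge (J y i j - J x i j) N &
        forall x, X x -> \det (J x) != 0 /\ v (\det (J x)) = 0].

Section RS.
Variable m : nat.
Variable S : 'rV[K]_m -> Prop.

Definition gen : Type := {k : nat & 'rV[K]_m -> 'rV[K]_k -> Prop}.
Definition mkgen (k : nat) (X : 'rV[K]_m -> 'rV[K]_k -> Prop) : gen := existT _ k X.

Definition admissible (k : nat) (X : 'rV[K]_m -> 'rV[K]_k -> Prop) : Prop :=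
  [/\ definable2 X, (forall s x, X s x -> S s) & (forall s, S s -> fin_meas (X s))].

(* free abelian group on the symbols: finitely supported maps gen -> int *)
Definition delta (g : gen) : gen -> int :=
  fun g' => if excluded_middle_informative (g' = g) then 1 else 0.

Definition timesZp (k : nat) (X : 'rV[K]_m -> 'rV[K]_k -> Prop) :
    'rV[K]_m -> 'rV[K]_(k + 1) -> Prop :=
  fun s z => X s (lsubmx z) /\ inO (rsubmx z 0 0).

Definition is_rel (r : gen -> int) : Prop :=
  (exists (k : nat) (X1 X2 : 'rV[K]_m -> 'rV[K]_k -> Prop),
     [/\ admissible X1, admissible X2, (forall s x, ~ (X1 s x /\ X2 s x)) &
         r = fun g => delta (mkgen (fun s x => X1 s x \/ X2 s x)) g
                      - delta (mkgen X1) g - delta (mkgen X2) g])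
  \/ (exists (k : nat) (X : 'rV[K]_m -> 'rV[K]_k -> Prop),
     [/\ admissible X, (forall s, S s -> dim_lt (X s)) & r = delta (mkgen X)])
  \/ (exists (k : nat) (X Y : 'rV[K]_m -> 'rV[K]_k -> Prop)
        (phi : 'rV[K]_m -> 'rV[K]_k -> 'rV[K]_k),
     [/\ admissible X, admissible Y,
         (* phi : X -> Y, (s,x) |-> (s, phi_s x), is L-definable *)
         definable (fun z : 'rV[K]_((m + k) + (m + k)) =>
            X (lsubmx (lsubmx z)) (rsubmx (lsubmx z)) /\
            lsubmx (rsubmx z) = lsubmx (lsubmx z) /\
            rsubmx (rsubmx z) = phi (lsubmx (lsubmx z)) (rsubmx (lsubmx z))),
         (forall s, S s ->
            [/\ open_set (X s) /\ open_set (Y s),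
                (forall x, X s x -> Y s (phi s x)),
                (forall x y, X s x -> X s y -> phi s x = phi s y -> x = y),
                (forall y, Y s y -> exists x, X s x /\ phi s x = y) &
                C1_jac1 (X s) (phi s)]) &
         r = fun g => delta (mkgen X) g - delta (mkgen Y) g])
  \/ (exists (k : nat) (X : 'rV[K]_m -> 'rV[K]_k -> Prop),
     admissible X /\
     r = fun g => delta (mkgen X) g - delta (mkgen (timesZp X)) g).

Definition RS_zero (z : gen -> int) : Prop :=
  exists (N : nat) (c : nat -> int) (r : nat -> gen -> int),
    (forall i, (i < N)%N -> is_rel (r i)) /\
    forall g, z g = \sum_(i < N) c i * r i g.

Definition RS_eq (a b : gen -> int) : Prop := RS_zero (fun g => a g - b g).

Definition RS_one : gen -> int :=
  delta (mkgen (fun (s : 'rV[K]_m) (x : 'rV[K]_1) => S s /\ inO (x 0 0))).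

Definition P_diag (n : nat) : 'rV[K]_m -> 'rV[K]_n -> Prop :=
  fun s x => S s /\ (forall j, ac_one (x 0 j)) /\
             exists lam : nat, forall j, v (x 0 j) = lam%:Z.

End RS.
End Padic.

(* Main.v *)
Require Import Defs.
From HB Require Import structures.
From mathcomp Require Import all_boot all_order all_algebra.
From Stdlib Require Import ClassicalEpsilon FunctionalExtensionality PropExtensionality Classical.
Set Implicit Arguments. Unset Strict Implicit. Unset Printing Implicit Defensive.
Import Order.TTheory GRing.Theory Num.Theory.
Local Open Scope ring_scope.
From mathcomp Require Import ring lra.
From mathcomp Require Import zify.
From mathcomp Require Import fingroup perm.
Section Val.
Variable p : nat.
Variable K : fieldType.
Variable v : K -> int.
Hypothesis pp : prime p.
Hypothesis HQ : is_Qp p v.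

Local Notation vge := (@vge K v).
Local Notation pK := (p%:R : K).

Lemma vM x y : x != 0 -> y != 0 -> v (x * y) = v x + v y.
Proof. by case: HQ => H _ _ _ _; apply: H. Qed.

Lemma vultra x y : x != 0 -> y != 0 -> x + y != 0 ->
  (v x <= v (x + y)) || (v y <= v (x + y)).
Proof. by case: HQ => _ H _ _ _; apply: H. Qed.

Lemma pK_neq0 : pK != 0. Proof. by case: HQ => _ _ [] . Qed.
Lemma vp : v pK = 1. Proof. by case: HQ => _ _ [] . Qed.

Lemma v1 : v 1 = 0.
Proof.
have := vM (oner_neq0 K) (oner_neq0 K); rewrite mulr1 => h.
have : v 1 + v 1 - v 1 = v 1 - v 1 by rewrite -h.
by rewrite addrK subrr.
Qed.

Lemma vN1 : v (-1) = 0.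
Proof.
have n1 : (-1 : K) != 0 by rewrite oppr_eq0 oner_neq0.
have := vM n1 n1; rewrite mulrNN mulr1 v1 => h.
have : (2 : int) * v (-1) = 0 by rewrite mulr2n mulrDl mul1r -h.
by move/eqP; rewrite mulf_eq0 /= => /eqP.
Qed.

Lemma vN x : x != 0 -> v (- x) = v x.
Proof.
move=> nx; rewrite -mulN1r vM ?vN1 ?add0r //.
by rewrite oppr_eq0 oner_neq0.
Qed.

Lemma vV x : x != 0 -> v x^-1 = - v x.
Proof.
move=> nx; have nxi : x^-1 != 0 by rewrite invr_eq0.
have := vM nx nxi; rewrite mulfV // v1 => /eqP.
by rewrite eq_sym addr_eq0 => /eqP ->; rewrite opprK.
Qed.

Lemma vX x n : x != 0 -> v (x ^+ n) = v x *+ n.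
Proof.
move=> nx; elim: n => [|n IH]; first by rewrite expr0 v1.
by rewrite exprS vM ?expf_neq0 // IH mulrS.
Qed.

Lemma vpz (z : int) : v (pK ^ z) = z.
Proof.
case: z => n.
  by rewrite -exprnP vX ?pK_neq0 // vp natz.
rewrite NegzE -exprnN vV ?expf_neq0 ?pK_neq0 // vX ?pK_neq0 // vp.
by rewrite natz.
Qed.

Lemma vgeE x k : x != 0 -> vge x k <-> k <= v x.
Proof. by move=> nx; rewrite /Defs.vge; split=> [[/eqP|]|]; rewrite ?(negbTE nx) //; right. Qed.

Lemma vge0 k : vge 0 k. Proof. by left. Qed.

Lemma vge_le x k k' : k' <= k -> vge x k -> vge x k'.
Proof. by move=> h [->|h']; [left|right; apply: le_trans h']. Qed.

Lemma vgeN x k : vge x k -> vge (- x) k.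
Proof.
case: (eqVneq x 0) => [->|nx]; first by rewrite oppr0; left.
by rewrite !vgeE ?oppr_eq0 // vN.
Qed.

Lemma vgeD x y k : vge x k -> vge y k -> vge (x + y) k.
Proof.
case: (eqVneq x 0) => [-> _|nx]; first by rewrite add0r.
case: (eqVneq y 0) => [-> h _|ny]; first by rewrite addr0.
case: (eqVneq (x + y) 0) => [-> _ _|nxy]; first by left.
rewrite !vgeE // => hx hy.
by case/orP: (vultra nx ny nxy) => h; [apply: le_trans h|apply: le_trans h].
Qed.

Lemma vgeB x y k : vge x k -> vge y k -> vge (x - y) k.
Proof. by move=> hx hy; apply: vgeD => //; apply: vgeN. Qed.

Lemma vgeM x y k1 k2 : vge x k1 -> vge y k2 -> vge (x * y) (k1 + k2).
Proof.
case: (eqVneq x 0) => [-> _|nx]; first by rewrite mul0r; left.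
case: (eqVneq y 0) => [-> _ _|ny]; first by rewrite mulr0; left.
rewrite !vgeE ?mulf_neq0 // vM // => h1 h2.
by apply: lerD.
Qed.

Lemma vge_nat k : vge (k%:R) 0.
Proof.
elim: k => [|k IH]; first by left.
by rewrite mulrS; apply: vgeD => //; right; rewrite v1.
Qed.

Lemma vge1 : vge 1 0. Proof. by right; rewrite v1. Qed.

Lemma vge_sum (I : Type) (r : seq I) (P : pred I) (F : I -> K) k :
  (forall i, P i -> vge (F i) k) -> vge (\sum_(i <- r | P i) F i) k.
Proof.
move=> h; elim/big_rec: _ => [|i x Pi hx]; first by left.
by apply: vgeD => //; apply: h.
Qed.

Lemma vgeX x n : vge x 0 -> vge (x ^+ n) 0.
Proof.
move=> hx; elim: n => [|n IH]; first by rewrite expr0; apply: vge1.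
by rewrite exprS -(addr0 (0:int)); apply: vgeM.
Qed.

Lemma vge_pM x k : vge x k -> vge (pK * x) (k + 1).
Proof. by move=> h; rewrite addrC; apply: vgeM => //; right; rewrite vp. Qed.

Lemma vge_pz (z : int) : vge (pK ^ z) z.
Proof. by right; rewrite vpz. Qed.

Lemma vge_cancel a z k : a != 0 -> v a = 0 -> vge (a * z) k -> vge z k.
Proof.
move=> na va; case: (eqVneq z 0) => [->|nz]; first by left.
by rewrite !vgeE ?mulf_neq0 // vM // va add0r.
Qed.

Lemma vge_not_unit : ~ vge 1 1.
Proof. by rewrite vgeE ?oner_neq0 // v1. Qed.

Lemma v_strict x y : x != 0 -> (y == 0) || (v x < v y) -> x + y != 0 /\ v (x + y) = v x.
Proof.
move=> nx; case: (eqVneq y 0) => [-> _|ny /= hlt]; first by rewrite addr0.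
have nxy : x + y != 0.
  apply/negP => /eqP h; have : y = - x by rewrite -(addKr x y) h addr0.
  by move=> e; move: hlt; rewrite e vN // ltxx.
split => //.
have h1 := vultra nx ny nxy.
have h1' : v x <= v (x + y).
  case/orP: h1 => // h; apply: le_trans h; exact: ltW.
have nny : - y != 0 by rewrite oppr_eq0.
have e : x = (x + y) + - y by rewrite addrK.
have h2 := vultra nxy nny; rewrite -e in h2; have := h2 nx.
case/orP => h.
  by apply/eqP; rewrite eq_le h h1'.
by move: h; rewrite vN // => h; move: (lt_le_trans hlt h); rewrite ltxx.
Qed.

Lemma unit1p w : vge w 1 -> 1 + w != 0 /\ v (1 + w) = 0.
Proof.
move=> hw; rewrite -v1; apply: v_strict; first exact: oner_neq0.
case: (eqVneq w 0) => //= nw; move: hw; rewrite vgeE // v1; exact: lt_le_trans.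
Qed.

Lemma digit_unit d : (0 < d < p)%N -> (d%:R : K) != 0 /\ v d%:R = 0.
Proof.
move=> /andP [d0 dp].
have cop : coprime d p.
  rewrite coprime_sym prime_coprime //; apply/negP => h.
  by have := dvdn_leq d0 h; rewrite leqNgt dp.
case: (egcdnP p d0) => km kn e _.
move: cop; rewrite /coprime => /eqP g1; rewrite g1 in e.
have eK : (km%:R * d%:R : K) = kn%:R * pK + 1 by rewrite -!natrM e natrD.
have nvd : ~ vge (d%:R : K) 1.
  move=> h; apply: vge_not_unit.
  have -> : (1 : K) = km%:R * d%:R - kn%:R * pK by rewrite eK addrAC subrr add0r.
  apply: vgeB.
    by rewrite -(add0r (1:int)); apply: vgeM => //; apply: vge_nat.
  by rewrite mulrC -(add0r (1:int)); apply: vge_pM; apply: vge_nat.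
have nd : (d%:R : K) != 0 by apply/negP => /eqP h; apply: nvd; rewrite h; left.
split => //.
have := vge_nat d; rewrite vgeE // => h0.
apply/eqP; rewrite eq_le h0 andbT; rewrite leNgt; apply/negP => h1.
by apply: nvd; rewrite vgeE //.
Qed.

Definition cong (x y : K) := vge (x - y) 1.

Lemma digit_eq d1 d2 : (d1 < p)%N -> (d2 < p)%N -> cong d1%:R d2%:R -> d1 = d2.
Proof.
wlog le12 : d1 d2 / (d2 <= d1)%N.
  move=> W h1 h2 hc; case: (leqP d2 d1) => h; first exact: W.
  symmetry; apply: W => //; first exact: ltnW.
  by rewrite /cong -opprB; apply: vgeN.
move=> h1 h2 hc; apply/eqP; rewrite eq_sym eqn_leq le12 /= leqNgt; apply/negP=> lt.
have [nz vz] := @digit_unit (d1 - d2) ltac:(by rewrite subn_gt0 lt /= (leq_ltn_trans (leq_subr _ _) h1)).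
by move: hc; rewrite /cong -natrB ?vgeE ?vz //; apply: ltnW.
Qed.


Lemma cong_refl x : cong x x. Proof. by rewrite /cong subrr; left. Qed.
Lemma cong_sym x y : cong x y -> cong y x.
Proof. by move=> h; rewrite /cong -opprB; apply: vgeN. Qed.
Lemma cong_trans x y z : cong x y -> cong y z -> cong x z.
Proof.
by move=> h1 h2; have := vgeD h1 h2; rewrite /cong addrA subrK.
Qed.
Lemma cong_add x y x' y' : cong x y -> cong x' y' -> cong (x + x') (y + y').
Proof.
by move=> h1 h2; have := vgeD h1 h2; rewrite /cong opprD addrACA.
Qed.
Lemma cong_sub x y x' y' : cong x y -> cong x' y' -> cong (x - x') (y - y').
Proof.
move=> h1 h2; have := vgeB h1 h2; rewrite /cong.
by have -> : (x - x') - (y - y') = (x - y) - (x' - y') by ring.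
Qed.
Lemma cong_M a b c d : vge a 0 -> vge d 0 -> cong a b -> cong c d -> cong (a * c) (b * d).
Proof.
move=> ha hd h1 h2; rewrite /cong.
have -> : a * c - b * d = a * (c - d) + (a - b) * d.
  by rewrite mulrBr mulrBl addrA subrK.
apply: vgeD.
  by rewrite -(add0r (1:int)); apply: vgeM.
by rewrite -(addr0 (1:int)); apply: vgeM.
Qed.
Lemma vge_of_cong a b : vge b 0 -> cong a b -> vge a 0.
Proof.
move=> hb h; have -> : a = (a - b) + b by rewrite subrK.
by apply: vgeD => //; apply: vge_le h.
Qed.
Lemma cong_X a b n : vge a 0 -> vge b 0 -> cong a b -> cong (a ^+ n) (b ^+ n).
Proof.
move=> ha hb h; elim: n => [|n IH]; first by rewrite !expr0; apply: cong_refl.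
by rewrite !exprS; apply: cong_M => //; apply: vgeX.
Qed.

Lemma vge_nat_cong (a b : nat) : a = b %[mod p] -> cong a%:R b%:R.
Proof.
move=> e; rewrite /cong (divn_eq a p) (divn_eq b p) e !natrD !natrM.
rewrite opprD addrACA subrr addr0 -mulrBl mulrC -(add0r (1:int)).
by apply: vge_pM; apply: vgeB; apply: vge_nat.
Qed.

Lemma residue u : vge u 0 -> exists2 j, (j < p)%N & cong u j%:R.
Proof.
move=> hu; case: HQ => _ _ _ H _; case: (H u hu) => k hk.
exists (k %% p)%N; first by rewrite ltn_mod prime_gt0.
by apply: cong_trans hk _; apply: vge_nat_cong; rewrite modn_mod.
Qed.

Lemma eq_le_trans_tmp (a : int) (b : int) : a = b -> b <= a. Proof. by move=> ->. Qed.

Lemma unit_residue u : u != 0 -> v u = 0 -> exists2 j, (0 < j < p)%N & cong u j%:R.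
Proof.
move=> nu vu; have [j jp hj] := residue (or_intror (eq_le_trans_tmp vu)).
exists j => //; rewrite jp andbT lt0n; apply/negP => /eqP j0.
by move: hj; rewrite j0 /cong subr0 vgeE // vu.
Qed.

Lemma fermatK j : (0 < j < p)%N -> cong ((j%:R : K) ^+ p.-1) 1.
Proof.
move=> hj; have [nj vj] := digit_unit hj.
have h := vge_nat_cong (fermat_little j pp).
have e : (p = p.-1.+1)%N by rewrite prednK // prime_gt0.
move: h; rewrite /cong natrX.
have -> : (j%:R : K) ^+ p - j%:R = j%:R * ((j%:R) ^+ p.-1 - 1).
  by rewrite mulrBr mulr1 -exprS -e.
exact: vge_cancel.
Qed.

Lemma unit_pow u : u != 0 -> v u = 0 -> cong (u ^+ p.-1) 1.
Proof.
move=> nu vu; have [j hj cj] := unit_residue nu vu.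
apply: cong_trans (fermatK hj).
by apply: cong_X => //; [right; rewrite vu | apply: vge_nat].
Qed.

Lemma vge_shift z k (c : int) : vge z k -> vge (z * pK ^ c) (k + c).
Proof. by move=> h; apply: vgeM => //; apply: vge_pz. Qed.

Lemma pz_mulV (c : int) : pK ^ c * pK ^ (- c) = 1.
Proof. by rewrite -expfzDr ?pK_neq0 // subrr expr0z. Qed.

Definition acK (x : K) := ac_one p v x.

Lemma ac_unit_part x : x != 0 -> x * pK ^ (- v x) != 0 /\ v (x * pK ^ (- v x)) = 0.
Proof.
move=> nx; have ne : pK ^ (- v x) != 0 by rewrite expfz_neq0 ?pK_neq0.
by rewrite mulf_neq0 // vM // vpz subrr.
Qed.

Lemma ac_char x : acK x <-> exists y t (r : nat),
  [/\ y != 0, vge t 0, (r < p.-1)%N & x = y ^+ p.-1 * pK ^+ r * (1 + pK * t)].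
Proof.
have p1 : (0 < p.-1)%N by rewrite -subn1 subn_gt0 prime_gt1.
have p1z : (0 : int) < (p.-1)%:Z by [].
split.
  case=> nx hw.
  set w := x * pK ^ (- v x) in hw.
  set t := (w - 1) * pK ^ (-1).
  have ht : vge t 0 by rewrite /t -(subrr (1:int)); apply: vge_shift.
  have wt : w = 1 + pK * t.
    rewrite /t exprN1 [(w - 1) * _]mulrC mulrA mulfV ?pK_neq0 // mul1r.
    by rewrite addrC subrK.
  set q := ((v x) %/ (p.-1)%:Z)%Z; set r := ((v x) %% (p.-1)%:Z)%Z.
  have r0 : 0 <= r by rewrite /r modz_ge0 // lt0r_neq0.
  have rlt : r < (p.-1)%:Z by rewrite /r ltz_pmod.
  exists (pK ^ q), t, `|r|%N; split.
  - by rewrite expfz_neq0 ?pK_neq0.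
  - exact: ht.
  - by rewrite -ltz_nat gez0_abs.
  - have E1 : (pK ^ q) ^+ p.-1 * pK ^+ `|r|%N = pK ^ (v x).
      rewrite exprnP exprz_exp exprnP gez0_abs // -expfzDr ?pK_neq0 //.
      by rewrite [v x in RHS](divz_eq (v x) (p.-1)%:Z).
    by rewrite -wt E1 /w mulrCA pz_mulV mulr1.
case=> y [t [r [ny ht hr ->]]].
have [nw vw] : 1 + pK * t != 0 /\ v (1 + pK * t) = 0.
  by apply: unit1p; rewrite -(add0r (1:int)); apply: vge_pM.
have npr : pK ^+ r != 0 by rewrite expf_neq0 ?pK_neq0.
have nyp : y ^+ p.-1 != 0 by rewrite expf_neq0.
have nx : y ^+ p.-1 * pK ^+ r * (1 + pK * t) != 0 by rewrite !mulf_neq0.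
split => //.
set u := y * pK ^ (- v y).
have [nu vu] := ac_unit_part ny.
rewrite -/u in nu vu.
have ey : y = u * pK ^ (v y) by rewrite /u -mulrA [X in _ * X]mulrC pz_mulV mulr1.
have vx : v (y ^+ p.-1 * pK ^+ r * (1 + pK * t)) = v y *+ p.-1 + r%:Z.
  by rewrite (vM (mulf_neq0 nyp npr) nw) vw addr0 (vM nyp npr) vX // exprnP vpz.
rewrite vx.
have -> : y ^+ p.-1 * pK ^+ r * (1 + pK * t) * pK ^ (- (v y *+ p.-1 + r%:Z)) =
          u ^+ p.-1 * (1 + pK * t).
  have E2 : (pK ^ v y) ^+ p.-1 * pK ^+ r * pK ^ (- (v y *+ p.-1 + r%:Z)) = 1.
    rewrite exprnP exprz_exp exprnP -expfzDr ?pK_neq0 // -expfzDr ?pK_neq0 //.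
    by rewrite -[(p.-1)%:Z]natz mulrnAr mulr1 subrr expr0z.
  rewrite {1}ey exprMn.
  transitivity (u ^+ p.-1 * (1 + pK * t) *
     ((pK ^ v y) ^+ p.-1 * pK ^+ r * pK ^ (- (v y *+ p.-1 + r%:Z)))); first by ring.
  by rewrite E2 mulr1.
apply: (@cong_trans _ (1 * 1)); last by rewrite mulr1; apply: cong_refl.
apply: cong_M.
- by apply: vgeX; right; rewrite vu.
- exact: vge1.
- exact: unit_pow.
- by rewrite /cong addrC addKr -(add0r (1:int)); apply: vge_pM.
Qed.

Lemma In_inP_tmp (T : eqType) (x : T) (l : seq T) : reflect (List.In x l) (x \in l).
Proof.
elim: l => [|y l IH] /=; first by right.
rewrite in_cons; apply: (iffP orP).
  by case=> [/eqP ->|/IH]; [left|right].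
by case=> [->|/IH]; [left; rewrite eqxx|right].
Qed.

Definition DEF (Q : (nat -> K) -> Prop) := exists f, forall e, Q e <-> sat v e f.

Lemma teval_ext (e e' : nat -> K) t : (forall i, e i = e' i) -> teval e t = teval e' t.
Proof. by move=> h; elim: t => /= [i|||a -> b ->|a -> b ->|a ->]. Qed.

Lemma sat_ext f : forall (e e' : nat -> K), (forall i, e i = e' i) -> sat v e f <-> sat v e' f.
Proof.
elim: f => /= [a b|a|g IH|g IHg h IHh|i g IH] e e' he.
- by rewrite !(teval_ext a he) !(teval_ext b he).
- by rewrite (teval_ext a he).
- by rewrite (IH e e' he).
- by rewrite (IHg e e' he) (IHh e e' he).
- have hu : forall a j, upd e i a j = upd e' i a j.
    by move=> a j; rewrite /upd; case: (j == i).
  by split=> [[a H]|[a H]]; exists a; move: H; rewrite (IH _ _ (hu a)).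
Qed.

Lemma DEF_resp Q e e' : DEF Q -> (forall i, e i = e' i) -> Q e <-> Q e'.
Proof. by case=> f H h; rewrite !H; apply: sat_ext. Qed.

Lemma DEF_respP Q (hQ : DEF Q) e e' : Q e -> (forall i, e i = e' i) -> Q e'.
Proof. by case: hQ => f H h he; rewrite H -(sat_ext f he) -H. Qed.

Lemma DEF_ext Q Q' : DEF Q -> (forall e, Q e <-> Q' e) -> DEF Q'.
Proof. by case=> f H h; exists f => e; rewrite -h. Qed.

Lemma DEF_eq t1 t2 : DEF (fun e => teval e t1 = teval e t2).
Proof. by exists (FEq t1 t2). Qed.

Lemma DEF_O t : DEF (fun e => inO v (teval e t)).
Proof. by exists (FO t). Qed.

Lemma DEF_not Q : DEF Q -> DEF (fun e => ~ Q e).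
Proof. by case=> f H; exists (FNot f) => e /=; rewrite H. Qed.

Lemma DEF_and Q1 Q2 : DEF Q1 -> DEF Q2 -> DEF (fun e => Q1 e /\ Q2 e).
Proof. by case=> f H [g G]; exists (FAnd f g) => e /=; rewrite H G. Qed.

Lemma DEF_or Q1 Q2 : DEF Q1 -> DEF Q2 -> DEF (fun e => Q1 e \/ Q2 e).
Proof.
move=> h1 h2; apply: DEF_ext (DEF_not (DEF_and (DEF_not h1) (DEF_not h2))) _.
by move=> e; split=> [/not_and_or [] /NNPP|[] h [] ]; auto.
Qed.

Lemma DEF_True : DEF (fun _ => True).
Proof. by exists (FEq TZero TZero). Qed.

Lemma DEF_False : DEF (fun _ => False).
Proof. by exists (FNot (FEq TZero TZero)) => e /=; split => // h; apply: h. Qed.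

Lemma DEF_ex i Q : DEF Q -> DEF (fun e => exists a, Q (upd e i a)).
Proof.
by case=> f H; exists (FEx i f) => e /=; split=> [[a]|[a]]; exists a; apply/H.
Qed.

Lemma DEF_all_list (T : Type) (l : seq T) (Q : T -> (nat -> K) -> Prop) :
  (forall x, DEF (Q x)) -> DEF (fun e => forall x, List.In x l -> Q x e).
Proof.
move=> h; elim: l => [|x l IH].
  by apply: DEF_ext DEF_True _ => e; split.
apply: DEF_ext (DEF_and (h x) IH) _ => e /=; split.
  by case=> h1 h2 y [<-|]; [|apply: h2].
by move=> H; split; [apply: H; left|move=> y hy; apply: H; right].
Qed.

Lemma DEF_ex_list (T : Type) (l : seq T) (Q : T -> (nat -> K) -> Prop) :
  (forall x, DEF (Q x)) -> DEF (fun e => exists x, List.In x l /\ Q x e).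
Proof.
move=> h; elim: l => [|x l IH].
  by apply: DEF_ext DEF_False _ => e; split => // [[y []]].
apply: DEF_ext (DEF_or (h x) IH) _ => e /=; split.
  by case=> [H|[y [hy H]]]; [exists x; split => //; left|exists y; split=> //; right].
by case=> y [[<-|hy] H]; [left|right; exists y].
Qed.

Lemma DEF_all_fin (T : finType) (Q : T -> (nat -> K) -> Prop) :
  (forall x, DEF (Q x)) -> DEF (fun e => forall x, Q x e).
Proof.
move=> h; apply: DEF_ext (DEF_all_list (enum T) h) _ => e; split.
  by move=> H x; apply: H; apply/(@In_inP_tmp _); rewrite mem_enum.
by move=> H x _; apply: H.
Qed.

Definition updF (e : nat -> K) (b n : nat) (y : nat -> K) : nat -> K :=
  fun i => if (b <= i < b + n)%N then y i else e i.

Lemma DEF_exF b n Q : DEF Q -> DEF (fun e => exists y, Q (updF e b n y)).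
Proof.
move=> hQ; elim: n => [|n IH].
  have h0 : forall e y i, updF e b 0 y i = e i.
    move=> e y i; rewrite /updF addn0.
    by case: (leqP b i) => h //=; rewrite ltnNge h.
  apply: (DEF_ext hQ) => e; split=> [h|[y h]].
    by exists e; apply: (DEF_respP hQ h) => i; rewrite h0.
  by apply: (DEF_respP hQ h) => i; rewrite h0.
apply: DEF_ext (DEF_ex (b + n) IH) _ => e; split.
  case=> a [y h]; exists (fun i => if i == (b + n)%N then a else y i).
  apply: (DEF_respP hQ h) => i; rewrite /updF /upd addnS ltnS.
  case: (eqVneq i (b + n)) => [->|ne]; first by rewrite leq_addr leqnn ltnn.
  by rewrite [(i <= b + n)%N]leq_eqVlt (negbTE ne) /=.
case=> y h; exists (y (b + n)), y.
apply: (DEF_respP hQ h) => i; rewrite /updF /upd addnS ltnS.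
case: (eqVneq i (b + n)) => [->|ne]; first by rewrite leq_addr leqnn ltnn.
by rewrite [(i <= b + n)%N]leq_eqVlt (negbTE ne) /=.
Qed.

Fixpoint tnat (k : nat) : term := if k is k'.+1 then TAdd (tnat k') TOne else TZero.
Lemma tnatE (e : nat -> K) k : teval e (tnat k) = (k%:R : K).
Proof. by elim: k => //= k ->; rewrite mulrS addrC. Qed.

Fixpoint tpow (t : term) (k : nat) : term := if k is k'.+1 then TMul (tpow t k') t else TOne.
Lemma tpowE (e : nat -> K) t k : teval e (tpow t k) = teval e t ^+ k.
Proof. by elim: k => //= k ->; rewrite exprSr. Qed.

Fixpoint tz (m : nat) (bnd : seq nat) (t : term) : term :=
  match t with
  | TVar i => if (i < m)%N || (i \in bnd) then TVar i else TZero
  | TZero => TZero | TOne => TOne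
  | TAdd a b => TAdd (tz m bnd a) (tz m bnd b)
  | TMul a b => TMul (tz m bnd a) (tz m bnd b)
  | TNeg a => TNeg (tz m bnd a)
  end.
Fixpoint fz (m : nat) (bnd : seq nat) (f : formula) : formula :=
  match f with
  | FEq a b => FEq (tz m bnd a) (tz m bnd b)
  | FO a => FO (tz m bnd a)
  | FNot g => FNot (fz m bnd g)
  | FAnd g h => FAnd (fz m bnd g) (fz m bnd h)
  | FEx i g => FEx i (fz m (i :: bnd) g)
  end.
Definition zenv (m : nat) (bnd : seq nat) (e : nat -> K) : nat -> K :=
  fun i => if (i < m)%N || (i \in bnd) then e i else 0.

Lemma tzE m bnd (e : nat -> K) t : teval e (tz m bnd t) = teval (zenv m bnd e) t.
Proof.
elim: t => /= [i|||a -> b ->|a -> b ->|a ->] //.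
by rewrite /zenv; case: ifP.
Qed.

Lemma fzE m f : forall bnd e, sat v e (fz m bnd f) <-> sat v (zenv m bnd e) f.
Proof.
elim: f => /= [a b|a|g IH|g IHg h IHh|i g IH] bnd e.
- by rewrite !tzE.
- by rewrite tzE.
- by rewrite IH.
- by rewrite IHg IHh.
- have hu : forall a j, zenv m (i :: bnd) (upd e i a) j = upd (zenv m bnd e) i a j.
    move=> a j; rewrite /zenv /upd in_cons.
    by case: (eqVneq j i) => [->|]; rewrite ?orbT //= orbF.
  by split=> [[a H]|[a H]]; exists a; move: H; rewrite IH (sat_ext g (hu a)).
Qed.

Lemma env_of_lt k (x : 'rV[K]_k) i (lt : (i < k)%N) : env_of x i = x 0 (Ordinal lt).
Proof. by rewrite /env_of insubT. Qed.

Lemma env_of_ge k (x : 'rV[K]_k) i : (k <= i)%N -> env_of x i = 0.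
Proof. by move=> h; rewrite /env_of insubF // ltnNge h. Qed.

Lemma env_of_ord k (x : 'rV[K]_k) (i : 'I_k) : env_of x i = x 0 i.
Proof. by rewrite (env_of_lt x (ltn_ord i)); congr (x 0 _); apply: val_inj. Qed.

Definition rowe (o k : nat) (e : nat -> K) : 'rV[K]_k := \row_(j < k) e (o + j)%N.

Lemma DEF_S (m : nat) (S : 'rV[K]_m -> Prop) :
  definable v S -> DEF (fun e => S (rowe 0 m e)).
Proof.
case=> f H; exists (fz m [::] f) => e; rewrite fzE H.
apply: sat_ext => i; rewrite /zenv orbF; case: (ltnP i m) => lt.
  by rewrite (env_of_lt _ lt) mxE add0n.
by rewrite env_of_ge.
Qed.

Lemma rowe_lsub a b (z : 'rV[K]_(a + b)) : lsubmx z = rowe 0 a (env_of z).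
Proof. by apply/rowP => j; rewrite !mxE add0n -(env_of_ord z (lshift b j)). Qed.

Lemma rowe_rsub a b (z : 'rV[K]_(a + b)) : rsubmx z = rowe a b (env_of z).
Proof. by apply/rowP => j; rewrite !mxE -(env_of_ord z (rshift a j)). Qed.

Lemma rowe_shift o k (e : nat -> K) o' k' (h : (o' + k' <= k)%N) :
  rowe o' k' (env_of (rowe o k e)) = rowe (o + o') k' e.
Proof.
apply/rowP => j; rewrite !mxE.
have lt : (o' + j < k)%N by apply: leq_trans h; rewrite ltn_add2l.
by rewrite (env_of_lt _ lt) mxE addnA.
Qed.

Lemma definable2_DEF (m k : nat) (X : 'rV[K]_m -> 'rV[K]_k -> Prop) :
  DEF (fun e => X (rowe 0 m e) (rowe m k e)) -> definable2 v X.
Proof.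
case=> f H; exists f => z; rewrite -H.
by rewrite rowe_lsub rowe_rsub.
Qed.

Lemma upd_ne (e : nat -> K) i a j : j != i -> upd e i a j = e j.
Proof. by rewrite /upd => /negbTE ->. Qed.
Lemma upd_eq (e : nat -> K) i a : upd e i a i = a.
Proof. by rewrite /upd eqxx. Qed.

Lemma DEF_ac i b : (i < b)%N -> DEF (fun e => acK (e i)).
Proof.
move=> ib.
have H := DEF_ex b (DEF_ex b.+1 (DEF_and (DEF_not (DEF_eq (TVar b) TZero))
  (DEF_and (DEF_O (TVar b.+1)) (DEF_ex_list (iota 0 p.-1) (fun r =>
     DEF_eq (TVar i) (TMul (TMul (tpow (TVar b) p.-1) (tpow (tnat p) r))
        (TAdd TOne (TMul (tnat p) (TVar b.+1))))))))).
apply: (DEF_ext H) => e /=; symmetry.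
have nbi : i != b by rewrite neq_ltn ib.
have nb1i : i != b.+1 by rewrite neq_ltn ltnS ltnW.
have nb1b : b != b.+1 by rewrite neq_ltn ltnSn.
rewrite ac_char; split.
  case=> a [c [r [na hc hr xe]]]; exists a, c.
  rewrite ?upd_eq ?(upd_ne _ _ nb1b) ?(upd_ne _ _ nb1i) ?(upd_ne _ _ nbi) ?upd_eq.
  split; first by move/eqP: na.
  split => //; exists r; split; first by apply/In_inP_tmp; rewrite mem_iota.
  by rewrite !tpowE tnatE xe /=; rewrite ?upd_eq ?(upd_ne _ _ nb1b) ?(upd_ne _ _ nb1i) ?(upd_ne _ _ nbi) ?upd_eq.
case=> a [c].
rewrite ?upd_eq ?(upd_ne _ _ nb1b) ?(upd_ne _ _ nb1i) ?(upd_ne _ _ nbi) ?upd_eq.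
case=> na [hc [r [/In_inP_tmp hr he]]]; exists a, c, r; split => //.
- by apply/eqP.
- by move: hr; rewrite mem_iota.
- by move: he; rewrite !tpowE tnatE /=; rewrite ?upd_eq ?(upd_ne _ _ nb1b) ?(upd_ne _ _ nb1i) ?(upd_ne _ _ nbi) ?upd_eq.
Qed.

Lemma DEF_sameval i j b : (i < b)%N -> (j < b)%N ->
  DEF (fun e => exists t, inO v t /\ t * e i = e j).
Proof.
move=> ib jb.
apply: (DEF_ext (DEF_ex b (DEF_and (DEF_O (TVar b)) (DEF_eq (TMul (TVar b) (TVar i)) (TVar j))))).
have nbi : i != b by rewrite neq_ltn ib.
have nbj : j != b by rewrite neq_ltn jb.
move=> e /=; split=> [[t h]|[t h]]; exists t; move: h;
  by rewrite upd_eq !(upd_ne _ _ nbi) !(upd_ne _ _ nbj).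
Qed.

Definition Pcond n (y : 'I_n -> K) :=
  (forall j, acK (y j)) /\ exists lam : nat, forall j, v (y j) = lam%:Z.

Lemma ac_neq0 x : acK x -> x != 0. Proof. by case. Qed.

Lemma Pcond_equiv n (y : 'I_n -> K) (r0 : 'I_n) : Pcond y <->
  (forall j, acK (y j)) /\ (forall j, inO v (y j)) /\
  (forall j, (exists t, inO v t /\ t * y j = y r0) /\ (exists t, inO v t /\ t * y r0 = y j)).
Proof.
split.
  case=> ha [lam hl]; split => //; split.
    by move=> j; right; rewrite hl.
  have hn := fun j => ac_neq0 (ha j).
  move=> j; split.
    exists (y r0 / y j); split; last by rewrite mulfVK.
    by right; rewrite vM ?invr_eq0 // vV // !hl subrr.
  exists (y j / y r0); split; last by rewrite mulfVK.
  by right; rewrite vM ?invr_eq0 // vV // !hl subrr.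
case=> ha [ho hs]; split => //.
have hn := fun j => ac_neq0 (ha j).
have v0 : 0 <= v (y r0) by case: (ho r0) => [/eqP|//]; rewrite (negbTE (hn r0)).
exists `|v (y r0)|%N => j; rewrite gez0_abs //.
have key : forall a b t, a != 0 -> inO v t -> t * a = b -> b != 0 -> v a <= v b.
  move=> a b t na ht e nb.
  have nt : t != 0 by apply/negP => /eqP t0; move: nb; rewrite -e t0 mul0r eqxx.
  rewrite -e vM //; rewrite lerDr; case: ht => [/eqP|//]; by rewrite (negbTE nt).
case: (hs j) => [[t1 [h1 e1]] [t2 [h2 e2]]].
apply/eqP; rewrite eq_le; apply/andP; split.
  exact: key e1 (hn r0).
exact: key e2 (hn j).
Qed.

Lemma DEF_P (m : nat) (S : 'rV[K]_m -> Prop) n (xp : 'I_n -> nat) b (r0 : 'I_n) :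
  definable v S -> (forall j, xp j < b)%N ->
  DEF (fun e => S (rowe 0 m e) /\ Pcond (fun j => e (xp j))).
Proof.
move=> dS hb.
have H := DEF_and (DEF_S dS) (DEF_and (DEF_all_fin (fun j => DEF_ac (hb j)))
  (DEF_and (DEF_all_fin (fun j => DEF_O (TVar (xp j))))
    (DEF_all_fin (fun j => DEF_and (DEF_sameval (hb j) (hb r0)) (DEF_sameval (hb r0) (hb j)))))).
apply: (DEF_ext H) => e /=.
by rewrite (Pcond_equiv _ r0).
Qed.

Section RSalg.
Variable m : nat.
Variable S : 'rV[K]_m -> Prop.

Local Notation gen := (gen K m).
Local Notation RZ := (RS_zero p v S).
Local Notation adm := (admissible p v S).

Lemma RZ0 : RZ (fun _ => 0).
Proof. by exists 0%N, (fun _ => 0), (fun _ _ => 0); split => // g; rewrite big_ord0. Qed.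

Lemma RZ_rel r : is_rel p v S r -> RZ r.
Proof.
move=> h; exists 1%N, (fun _ => 1), (fun _ => r); split; first by case.
by move=> g; rewrite big_ord1 mul1r.
Qed.

Lemma RZ_ext z z' : RZ z -> (forall g, z g = z' g) -> RZ z'.
Proof. by case=> N [c [r [h1 h2]]] e; exists N, c, r; split => // g; rewrite -e. Qed.

Lemma RZ_add z1 z2 : RZ z1 -> RZ z2 -> RZ (fun g => z1 g + z2 g).
Proof.
case=> N1 [c1 [r1 [h1 e1]]] [N2 [c2 [r2 [h2 e2]]]].
exists (N1 + N2)%N, (fun i => if (i < N1)%N then c1 i else c2 (i - N1)%N),
  (fun i => if (i < N1)%N then r1 i else r2 (i - N1)%N); split.
  move=> i hi; case: ifP => lt; first exact: h1.
  by apply: h2; rewrite ltn_subLR // leqNgt lt.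
move=> g; rewrite big_split_ord /= e1 e2; congr (_ + _).
  by apply: eq_bigr => i _; rewrite /= ltn_ord.
by apply: eq_bigr => i _; rewrite /= ltnNge leq_addr /= addKn.
Qed.

Lemma RZ_scale c z : RZ z -> RZ (fun g => c * z g).
Proof.
case=> N [c1 [r [h e]]]; exists N, (fun i => c * c1 i), r; split => // g.
by rewrite e mulr_sumr; apply: eq_bigr => i _; rewrite mulrA.
Qed.

Lemma RZ_opp z : RZ z -> RZ (fun g => - z g).
Proof. by move=> h; apply: RZ_ext (RZ_scale (-1) h) _ => g; rewrite mulN1r. Qed.

Definition Req (a b : gen -> int) := RZ (fun g => a g - b g).

Lemma Req_refl a : Req a a.
Proof. by apply: RZ_ext RZ0 _ => g; rewrite subrr. Qed.
Lemma Req_sym a b : Req a b -> Req b a.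
Proof. by move=> h; apply: RZ_ext (RZ_opp h) _ => g; rewrite opprB. Qed.
Lemma Req_trans a b c : Req a b -> Req b c -> Req a c.
Proof. by move=> h1 h2; apply: RZ_ext (RZ_add h1 h2) _ => g; rewrite addrA subrK. Qed.
Lemma Req_add a b c d : Req a b -> Req c d -> Req (fun g => a g + c g) (fun g => b g + d g).
Proof. by move=> h1 h2; apply: RZ_ext (RZ_add h1 h2) _ => g; rewrite opprD addrACA. Qed.
Lemma Req_ext a b a' b' : Req a b -> (forall g, a g = a' g) -> (forall g, b g = b' g) -> Req a' b'.
Proof. by move=> h e1 e2; apply: RZ_ext h _ => g; rewrite e1 e2. Qed.
Lemma Req_sum (I : Type) (l : seq I) (F G : I -> gen -> int) :
  (forall i, Req (F i) (G i)) -> Req (fun g => \sum_(i <- l) F i g) (fun g => \sum_(i <- l) G i g).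
Proof.
move=> h; elim: l => [|i l IH].
  by apply: Req_ext (Req_refl (fun _ => 0)) _ _ => g; rewrite big_nil.
by apply: Req_ext (Req_add (h i) IH) _ _ => g; rewrite big_cons.
Qed.

Lemma mkgen_ext k (X Y : 'rV[K]_m -> 'rV[K]_k -> Prop) :
  (forall s x, X s x <-> Y s x) -> mkgen X = mkgen Y.
Proof.
move=> h; congr mkgen; apply: functional_extensionality => s.
by apply: functional_extensionality => x; apply: propositional_extensionality.
Qed.

Lemma Req_R1 k (X1 X2 X : 'rV[K]_m -> 'rV[K]_k -> Prop) :
  adm X1 -> adm X2 -> (forall s x, ~ (X1 s x /\ X2 s x)) ->
  (forall s x, X s x <-> X1 s x \/ X2 s x) ->
  Req (delta (mkgen X)) (fun g => delta (mkgen X1) g + delta (mkgen X2) g).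
Proof.
move=> a1 a2 d e; rewrite (mkgen_ext e).
apply: RZ_ext (RZ_rel _) _; first by left; exists k, X1, X2; split.
by move=> g /=; rewrite opprD addrA.
Qed.

Lemma Req_R2 k (X : 'rV[K]_m -> 'rV[K]_k -> Prop) :
  adm X -> (forall s, S s -> dim_lt v (X s)) -> Req (delta (mkgen X)) (fun _ => 0).
Proof.
move=> a d; apply: RZ_ext (RZ_rel _) _; first by right; left; exists k, X; split.
by move=> g; rewrite subr0.
Qed.

Lemma Req_R4 k (X : 'rV[K]_m -> 'rV[K]_k -> Prop) :
  adm X -> Req (delta (mkgen X)) (delta (mkgen (timesZp v X))).
Proof. by move=> a; apply: RZ_rel; right; right; right; exists k, X. Qed.

Lemma Req_R3 k (X Y : 'rV[K]_m -> 'rV[K]_k -> Prop) (phi : 'rV[K]_m -> 'rV[K]_k -> 'rV[K]_k) :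
  adm X -> adm Y ->
  definable v (fun z : 'rV[K]_((m + k) + (m + k)) =>
            X (lsubmx (lsubmx z)) (rsubmx (lsubmx z)) /\
            lsubmx (rsubmx z) = lsubmx (lsubmx z) /\
            rsubmx (rsubmx z) = phi (lsubmx (lsubmx z)) (rsubmx (lsubmx z))) ->
  (forall s, S s ->
            [/\ open_set v (X s) /\ open_set v (Y s),
                (forall x, X s x -> Y s (phi s x)),
                (forall x y, X s x -> X s y -> phi s x = phi s y -> x = y),
                (forall y, Y s y -> exists x, X s x /\ phi s x = y) &
                C1_jac1 v (X s) (phi s)]) ->
  Req (delta (mkgen X)) (delta (mkgen Y)).
Proof. by move=> aX aY dp h; apply: RZ_rel; right; right; left; exists k, X, Y, phi. Qed.

End RSalg.

Lemma pK_ne0z (z : int) : pK ^ z != 0. Proof. by rewrite expfz_neq0 ?pK_neq0. Qed.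

Lemma pzK (z : int) y : y * pK ^ (- z) * pK ^ z = y.
Proof. by rewrite -mulrA [X in _ * X]mulrC pz_mulV mulr1. Qed.

Lemma ac_of y (lam : int) : cong (y * pK ^ (- lam)) 1 -> acK y /\ v y = lam.
Proof.
move=> h; set u := y * pK ^ (- lam).
have [nu vu] : u != 0 /\ v u = 0.
  by have := unit1p h; rewrite addrC subrK.
have ey : y = u * pK ^ lam by rewrite /u pzK.
have ny : y != 0 by rewrite ey mulf_neq0 ?pK_ne0z.
have vy : v y = lam by rewrite ey vM ?pK_ne0z // vu vpz add0r.
by split => //; split => //; rewrite vy.
Qed.

Lemma ac_inv y : acK y -> cong (y * pK ^ (- v y)) 1.
Proof. by case. Qed.

Lemma vge_mulpz x (lam : int) : vge x lam -> vge (x * pK ^ (- lam)) 0.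
Proof. by move=> h; rewrite -(subrr lam); apply: vge_shift. Qed.

Lemma vge_of_unitpart x (lam : int) : vge (x * pK ^ (- lam)) 0 -> vge x lam.
Proof.
by move=> h; rewrite -(pzK lam x); have := vge_shift lam h; rewrite add0r.
Qed.

Lemma cong_vge1 x y : vge y 1 -> cong x y -> vge x 1.
Proof. by move=> hy h; rewrite -(subrK y x); apply: vgeD. Qed.

Section Main.
Variable m : nat.
Variable S : 'rV[K]_m -> Prop.
Hypothesis dS : definable v S.
Variable n' : nat.
Local Notation n := n'.+1.

Definition digs := {ffun 'I_n -> 'I_p}.
Definition nzd (a : digs) := [exists j, (a j : nat) != 0%N].
Definition piv (a : digs) : 'I_n := odflt ord0 [pick j | (a j : nat) != 0%N].
Definition a0 (a : digs) : nat := a (piv a).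
Definition cc (a : digs) (j : 'I_n) : K := (1 - (a j)%:R) / (a0 a)%:R.
Definition Mx (a : digs) : 'M[K]_n :=
  \matrix_(i, j) ((i == j)%:R + (i == piv a)%:R * cc a j).
Definition phi (a : digs) (x : 'rV[K]_n) : 'rV[K]_n := x *m Mx a.

Lemma phiE a x j : phi a x 0 j = x 0 j + x 0 (piv a) * cc a j.
Proof.
rewrite /phi mxE; under eq_bigr do rewrite mxE mulrDr; rewrite big_split /=.
congr (_ + _).
  rewrite (bigD1 j) //= eqxx mulr1 big1 ?addr0 // => i /negbTE ->.
  by rewrite mulr0.
rewrite (bigD1 (piv a)) //= eqxx mul1r big1 ?addr0 // => i /negbTE ->.
by rewrite mul0r mulr0.
Qed.

Lemma piv_ne0 a : nzd a -> (0 < a0 a < p)%N.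
Proof.
move=> /existsP [j hj]; rewrite /a0 /piv ltn_ord andbT lt0n.
by case: pickP => [i hi|/(_ j) h] //=; rewrite hj in h.
Qed.

Section Nz.
Variable a : digs.
Hypothesis nza : nzd a.

Lemma a0_unit : ((a0 a)%:R : K) != 0 /\ v (a0 a)%:R = 0.
Proof. exact: digit_unit (piv_ne0 nza). Qed.

Lemma cc_O j : vge (cc a j) 0.
Proof.
have [n0 v0] := a0_unit.
rewrite /cc -(addr0 (0:int)); apply: vgeM.
  by apply: vgeB; [apply: vge1|apply: vge_nat].
by right; rewrite vV // v0 oppr0.
Qed.

Lemma a0_cc j : (a0 a)%:R * cc a j = 1 - (a j)%:R.
Proof. by have [n0 _] := a0_unit; rewrite /cc mulrC mulfVK. Qed.

Definition Dig (lam : nat) (x : 'rV[K]_n) :=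
  forall j, cong (x 0 j * pK ^ (- lam%:Z)) (a j)%:R.

Lemma W_dig x : Pcond (fun j => phi a x 0 j) -> exists lam, Dig lam x.
Proof.
case=> hac [lam hl]; exists lam => j.
have [n0 _] := a0_unit.
have cy : forall i, cong (phi a x 0 i * pK ^ (- lam%:Z)) 1.
  by move=> i; rewrite -(hl i); apply: ac_inv.
have ypiv : x 0 (piv a) = (a0 a)%:R * phi a x 0 (piv a).
  by rewrite phiE mulrDr mulrCA a0_cc /a0; ring.
have xj : x 0 j = phi a x 0 j - (1 - (a j)%:R) * phi a x 0 (piv a).
  by rewrite [phi a x 0 j]phiE ypiv -mulrA mulrCA a0_cc; ring.
rewrite xj mulrBl -mulrA.
have hO : vge (1 - (a j)%:R : K) 0 by apply: vgeB; [apply: vge1|apply: vge_nat].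
apply: (@cong_trans _ (1 - (1 - (a j)%:R) * 1)); last first.
  by rewrite mulr1 opprB addrC subrK; apply: cong_refl.
apply: cong_sub (cy j) _.
by apply: cong_M hO vge1 (cong_refl _) (cy _).
Qed.

Lemma dig_O lam x : Dig lam x -> forall j, vge (x 0 j) 0.
Proof.
move=> h j; have h1 := vge_of_cong (vge_nat _) (h j).
by apply: (vge_le _ (vge_of_unitpart h1)).
Qed.

Lemma dig_nz lam x : Dig lam x -> x 0 (piv a) != 0.
Proof.
move=> h; apply/negP => /eqP x0; have hc := h (piv a); rewrite x0 mul0r in hc.
have /andP [a0p _] := piv_ne0 nza.
have := @digit_eq 0 (a0 a) (prime_gt0 pp) (ltn_ord _).
by rewrite mulr0n => /(_ hc) e; move: a0p; rewrite -e.
Qed.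

Lemma W_of_dig s lam x : S s -> Dig lam x -> @P_diag p K v m S n s (phi a x).
Proof.
move=> hs h; split => //.
have key : forall j, cong (phi a x 0 j * pK ^ (- lam%:Z)) 1.
  move=> j; rewrite phiE mulrDl.
  have -> : x 0 (piv a) * cc a j * pK ^ (- lam%:Z) = x 0 (piv a) * pK ^ (- lam%:Z) * cc a j.
    by rewrite mulrAC.
  apply: (@cong_trans _ ((a j)%:R + (a0 a)%:R * cc a j)); last first.
    by rewrite a0_cc addrC subrK; apply: cong_refl.
  apply: cong_add (h j) _; apply: cong_M (h _) (cong_refl _).
    exact: (vge_of_cong (vge_nat _) (h _)).
  exact: cc_O.
split; first by move=> j; case: (ac_of (key j)).
by exists lam => j; case: (ac_of (key j)).
Qed.

End Nz.

Lemma dig_lt a b lam mu x : nzd a -> (lam < mu)%N -> Dig a lam x -> Dig b mu x -> False.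
Proof.
move=> nza lt ha hb; case/existsP: nza => j hj.
have hO := vge_of_cong (vge_nat _) (hb j).
have e : x 0 j * pK ^ (- lam%:Z) = x 0 j * pK ^ (- mu%:Z) * pK ^ (mu%:Z - lam%:Z).
  by rewrite -mulrA -expfzDr ?pK_neq0 // addrA addNr add0r.
have h1 : vge (x 0 j * pK ^ (- lam%:Z)) 1.
  rewrite e -(add0r (1:int)); apply: vgeM => //; apply: (vge_le _ (vge_pz _)).
  by move: lt; clear; lia.
have : cong (a j)%:R 0 by apply: cong_sym; rewrite /cong sub0r; apply: vgeN; apply: cong_vge1 h1 (cong_sym (ha j)).
rewrite -(mulr0n (1:K)) => /(digit_eq (ltn_ord _) (prime_gt0 pp)) e0.
by rewrite e0 in hj.
Qed.

Lemma dig_uniq a b lam mu x : nzd a -> nzd b -> Dig a lam x -> Dig b mu x -> a = b.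
Proof.
move=> na nb ha hb; case: (ltngtP lam mu) => [lt|lt|e].
- by case: (dig_lt na lt ha hb).
- by case: (dig_lt nb lt hb ha).
subst mu; apply/ffunP => j; apply: val_inj => /=.
apply: digit_eq (ltn_ord _) (ltn_ord _) _.
exact: cong_trans (cong_sym (ha j)) (hb j).
Qed.

Lemma dig_exists (x : 'rV[K]_n) : (forall j, vge (x 0 j) 0) -> (exists j, x 0 j != 0) ->
  exists a, nzd a /\ exists lam, Dig a lam x.
Proof.
move=> hO [j1 hj1].
case: (@arg_minnP _ j1 (fun j : 'I_n => (x 0 j != 0)%R) (fun j => absz (v (x 0 j))) hj1) => jm hjm hmin.
set lam := absz (v (x 0 jm)).
have v0 : forall j, x 0 j != 0 -> 0 <= v (x 0 j).
  by move=> j nj; case: (hO j) => [/eqP|//]; rewrite (negbTE nj).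
have hv : forall j, vge (x 0 j) lam%:Z.
  move=> j; case: (eqVneq (x 0 j) 0) => [->|nj]; first by left.
  right; rewrite -(gez0_abs (v0 j nj)) lez_nat; exact: hmin.
have hz : forall j, vge (x 0 j * pK ^ (- lam%:Z)) 0 by move=> j; apply: vge_mulpz.
have [d hd1 hd2] := fin_all_exists2 (fun j => residue (hz j)).
exists [ffun j => Ordinal (hd1 j)]; split; last first.
  by exists lam => j; rewrite ffunE.
apply/existsP; exists jm; rewrite ffunE /=; apply/eqP => d0.
have := hd2 jm; rewrite d0 /cong subr0.
have nz : x 0 jm * pK ^ (- lam%:Z) != 0 by rewrite mulf_neq0 ?pK_ne0z.
rewrite vgeE // vM ?pK_ne0z // vpz /lam gez0_abs ?v0 // subrr.
by [].
Qed.

Definition Zk k (s : 'rV[K]_m) (x : 'rV[K]_k) := S s /\ forall j, inO v (x 0 j).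
Definition Zero (s : 'rV[K]_m) (x : 'rV[K]_n) := S s /\ forall j, x 0 j = 0.
Definition Pd := @P_diag p K v m S n.
Definition W (a : digs) s x := Pd s (phi a x).
Definition U (l : seq digs) s x := exists a, List.In a l /\ W a s x.
Definition zf : digs := [ffun _ => Ordinal (prime_gt0 pp)].
Definition L := enum (predC1 zf).

Lemma nzd_zf a : a != zf -> nzd a.
Proof.
move=> h; rewrite /nzd; case: (boolP [exists j, (a j : nat) != 0%N]) => // /existsPn H.
move/negP: h; case; apply/eqP.
apply/ffunP => j; rewrite ffunE; apply: val_inj => /=.
by apply/eqP; move: (H j) => /negbNE.
Qed.

Lemma L_nzd a : List.In a L -> nzd a.
Proof. by move/In_inP_tmp; rewrite mem_enum => /nzd_zf. Qed.

Lemma L_size : size L = (p ^ n).-1.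
Proof. by rewrite -cardE cardC1 card_ffun !card_ord. Qed.

Lemma W_Dig a s x : nzd a -> W a s x -> S s /\ exists lam, Dig a lam x.
Proof. by move=> na [hs hP]; split => //; apply: W_dig. Qed.

Lemma partition s x : Zk s x <-> Zero s x \/ U L s x.
Proof.
split.
  case=> hs hO; case: (boolP [forall j, x 0 j == 0]) => [/forallP h|/forallPn [j hj]].
    by left; split => // j; apply/eqP.
  have [a [na [lam hd]]] := dig_exists hO (ex_intro _ j hj).
  right; exists a; split.
    apply/In_inP_tmp; rewrite mem_enum /=; apply/negP => /eqP e.
    by move: na; rewrite e /nzd; case/existsP => i; rewrite ffunE.
  exact: W_of_dig hs hd.
case=> [[hs h0]|[a [ha hw]]]; first by split => // j; rewrite h0; left.
have na := L_nzd ha.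
have [hs [lam hd]] := W_Dig na hw.
by split => //; apply: dig_O hd.
Qed.

Lemma disj_Zero_U s x : ~ (Zero s x /\ U L s x).
Proof.
case=> [[_ h0] [a [ha hw]]].
have na := L_nzd ha; have [_ [lam hd]] := W_Dig na hw.
by have := dig_nz na hd; rewrite h0 eqxx.
Qed.

Lemma U_cons a l s x : U (a :: l) s x <-> W a s x \/ U l s x.
Proof.
split; first by case=> b [[<-|hb] hw]; [left|right; exists b].
by case=> [h|[b [hb h]]]; [exists a; split => //; left|exists b; split => //; right].
Qed.

Lemma disj_W_U a l s x : nzd a -> (forall b, List.In b l -> nzd b) -> ~ List.In a l ->
  ~ (W a s x /\ U l s x).
Proof.
move=> na hl nin [hw [b [hb hw']]].
have [_ [lam hd]] := W_Dig na hw; have [_ [mu hd']] := W_Dig (hl b hb) hw'.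
by apply: nin; rewrite (dig_uniq na (hl b hb) hd hd').
Qed.

Lemma geom_bound (r : rat) : 0 <= r -> 2 * r <= 1 -> forall N, \sum_(i < N) r ^+ i <= 2.
Proof.
move=> r0 r1.
suff H : forall N, \sum_(i < N) r ^+ i + 2 * r ^+ N <= 2.
  move=> N; apply: le_trans (H N); rewrite lerDl; apply: mulr_ge0 => //.
  exact: exprn_ge0.
elim=> [|N IH]; first by rewrite big_ord0 expr0 add0r mulr1.
rewrite big_ord_recr /= exprSr.
have h : 2 * (r ^+ N * r) <= r ^+ N.
  rewrite mulrCA -[X in _ <= X]mulr1; apply: ler_wpM2l => //; exact: exprn_ge0.
by apply: le_trans IH; lra.
Qed.

Lemma fin_meas_O k (A : 'rV[K]_k -> Prop) : (0 < k)%N ->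
  (forall x, A x -> forall j, vge (x 0 j) 0) -> fin_meas p v A.
Proof.
move=> k0 hA; exists (fun _ => 0), (fun i => i%:Z); split.
  move=> x hx; exists 0%N => j; rewrite !mxE subr0; exact: hA.
exists 2 => N.
have pQ : p%:Q = p%:R :> rat by [].
rewrite pQ.
set q : rat := p%:R ^+ k.
have hq : 2 <= q.
  have p2 : (2 : rat) <= p%:R by rewrite ler_nat prime_gt1.
  apply: (le_trans p2); rewrite /q -(prednK k0).
  rewrite exprS -[X in X <= _]mulr1; apply: ler_wpM2l; first by apply: le_trans p2.
  by apply: exprn_ege1; apply: le_trans p2.
have q0 : 0 < q by apply: lt_le_trans hq.
set r := q^-1.
have r0 : 0 <= r by rewrite invr_ge0 ltW.
have r1 : 2 * r <= 1.
  by have := ler_wpM2r r0 hq; rewrite /r mulfV ?lt0r_neq0.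
apply: le_trans (geom_bound r0 r1 N); rewrite le_eqVlt; apply/orP; left; apply/eqP.
apply: eq_bigr => i _.
by rewrite /r /q exprVn -exprM exprnN PoszM.
Qed.

Lemma dim_lt_zero k (A : 'rV[K]_k -> Prop) : (0 < k)%N ->
  (forall x, A x -> forall j, x 0 j = 0) -> dim_lt v A.
Proof.
move=> k0 hA [|d] f injf [a [e H]] //.
have b1 : ball v a e a by move=> j; rewrite !mxE subrr; left.
set y2 : 'rV[K]_d.+1 := \row_j (a 0 j + (j == ord0)%:R * pK ^ e).
have b2 : ball v a e y2.
  move=> j; rewrite !mxE addrC addKr; case: (j == ord0); last by rewrite mul0r; left.
  by rewrite mul1r; apply: vge_pz.
have [x1 [h1 e1]] := H a b1; have [x2 [h2 e2]] := H y2 b2.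
have := e1 ord0; have := e2 ord0; rewrite (hA _ h1) (hA _ h2) mxE eqxx mul1r.
move=> e3 e4; have : pK ^ e = 0 by rewrite -e4 add0r in e3; rewrite e3.
by move/eqP; rewrite (negbTE (pK_ne0z e)).
Qed.

Section Nz2.
Variable a : digs.
Hypothesis nza : nzd a.

Definition psi (y : 'rV[K]_n) : 'rV[K]_n := \row_j (y 0 j - (1 - (a j)%:R) * y 0 (piv a)).

Lemma a0cc1 : (a0 a)%:R * (1 + cc a (piv a)) = 1.
Proof. by rewrite mulrDr mulr1 a0_cc // /a0 addrC subrK. Qed.

Lemma phi_psi y : phi a (psi y) = y.
Proof.
apply/rowP => j; rewrite phiE !mxE.
have e1 : (1 - (a (piv a))%:R) = (a0 a)%:R * cc a (piv a) :> K by rewrite a0_cc.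
rewrite e1 -(a0_cc nza j).
have : (a0 a)%:R * (1 + cc a (piv a)) = 1 :> K := a0cc1.
move=> h.
transitivity (y 0 j + cc a j * y 0 (piv a) * (1 - (a0 a)%:R * (1 + cc a (piv a))));
  first by ring.
by rewrite h subrr mulr0 addr0.
Qed.

Lemma psi_phi x : psi (phi a x) = x.
Proof.
apply/rowP => j; rewrite mxE !phiE -(a0_cc nza j).
have h : (a0 a)%:R * (1 + cc a (piv a)) = 1 :> K := a0cc1.
transitivity (x 0 j + cc a j * x 0 (piv a) * (1 - (a0 a)%:R * (1 + cc a (piv a))));
  first by ring.
by rewrite h subrr mulr0 addr0.
Qed.

Lemma phi_inj x y : phi a x = phi a y -> x = y.
Proof. by move=> e; rewrite -(psi_phi x) -(psi_phi y) e. Qed.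

Lemma det_Mx : \det (Mx a) = 1 + cc a (piv a).
Proof.
set s := tperm (ord0 : 'I_n) (piv a).
set A := col_perm s (row_perm s (Mx a)).
have eA : \det A = \det (Mx a).
  rewrite /A col_permE row_permE !detM det_perm det_perm odd_permV.
  by rewrite mulrC mulrA -expr2 sqrr_sign mul1r.
rewrite -eA -det_tr det_trig; last first.
  apply/is_trig_mxP => i j lt; rewrite !mxE.
  have nj : j != ord0 by rewrite -lt0n; apply: leq_ltn_trans lt.
  have ns : s j != piv a.
    apply/negP => /eqP e; move: nj; rewrite -(permK s j) e /s tpermV tpermR.
    by rewrite eqxx.
  have nij : s j != s i by rewrite (inj_eq perm_inj) eq_sym neq_ltn lt.
  by rewrite (negbTE ns) (negbTE nij) mul0r addr0.
rewrite (reindex_inj (@perm_inj _ s^-1)) /=.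
under eq_bigr do rewrite !mxE permKV.
rewrite (bigD1 (piv a)) //= eqxx mul1r big1 ?mulr1 // => i /negbTE ne.
by rewrite eqxx ne mul0r addr0.
Qed.

Lemma det_Mx_unit : \det (Mx a) != 0 /\ v (\det (Mx a)) = 0.
Proof.
have [n0 v0] := a0_unit nza.
have e : \det (Mx a) = ((a0 a)%:R)^-1.
  by rewrite det_Mx; apply: (mulfI n0); rewrite a0cc1 mulfV.
by rewrite e invr_eq0 n0 vV // v0 oppr0.
Qed.

Lemma C1_phi (X : 'rV[K]_n -> Prop) : C1_jac1 v X (phi a).
Proof.
exists (fun _ => Mx a); split.
- move=> x _ N; exists 0 => h _ _ t _ j.
  by rewrite /phi mulmxDl addrAC addrK subrr mxE; left.
- by move=> x _ N; exists 0 => y _ _ i j; rewrite subrr; left.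
- by move=> _ _; apply: det_Mx_unit.
Qed.

Lemma phi_ball x x' e : ball v x e x' -> ball v (phi a x) e (phi a x').
Proof.
move=> h j.
have -> : (phi a x' - phi a x) 0 j = phi a x' 0 j - phi a x 0 j by rewrite !mxE.
have -> : phi a x' 0 j - phi a x 0 j = (x' 0 j - x 0 j) + (x' 0 (piv a) - x 0 (piv a)) * cc a j.
  by rewrite !phiE; ring.
apply: vgeD; first by move: (h j); rewrite !mxE.
rewrite -(addr0 e); apply: vgeM; last exact: cc_O.
by move: (h (piv a)); rewrite !mxE.
Qed.

End Nz2.

Lemma Pd_open s y : Pd s y -> exists e, forall y', ball v y e y' -> Pd s y'.
Proof.
case=> hs [hac [lam hl]]; exists (lam%:Z + 1) => y' hb; split => //.
have key : forall j, cong (y' 0 j * pK ^ (- lam%:Z)) 1.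
  move=> j; apply: (@cong_trans _ (y 0 j * pK ^ (- lam%:Z))); last first.
    by rewrite -(hl j); apply: ac_inv (hac j).
  rewrite /cong -mulrBl.
  have := vge_shift (- lam%:Z) (hb j); rewrite !mxE.
  by rewrite addrAC subrr add0r.
split; first by move=> j; case: (ac_of (key j)).
by exists lam => j; case: (ac_of (key j)).
Qed.

Lemma Pcond_ext (y y' : 'I_n -> K) : (forall j, y j = y' j) -> Pcond y <-> Pcond y'.
Proof.
by move=> h; have -> : y = y' by apply: functional_extensionality.
Qed.

Lemma Pcond_extP (y y' : 'I_n -> K) : Pcond y -> (forall j, y j = y' j) -> Pcond y'.
Proof. by move=> h e; rewrite -(Pcond_ext e). Qed.

Lemma updF_lt (e : nat -> K) b k y i : (i < b)%N -> updF e b k y i = e i.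
Proof. by move=> h; rewrite /updF leqNgt h. Qed.

Lemma updF_in (e : nat -> K) b k y j : (j < k)%N -> updF e b k y (b + j) = y (b + j).
Proof. by move=> h; rewrite /updF leq_addr ltn_add2l h. Qed.

Lemma rowe_updF o k (e : nat -> K) b l y : (o + k <= b)%N -> rowe o k (updF e b l y) = rowe o k e.
Proof.
move=> h; apply/rowP => j; rewrite !mxE updF_lt //.
by apply: leq_trans h; rewrite ltn_add2l.
Qed.

Lemma DEF_Zk k : DEF (fun e => @Zk k (rowe 0 m e) (rowe m k e)).
Proof.
apply: (DEF_ext (DEF_and (DEF_S dS) (DEF_all_fin (fun j : 'I_k => DEF_O (TVar (m + j)))))).
by move=> e /=; split; case=> h1 h2; split => // j; move: (h2 j); rewrite mxE.
Qed.

Lemma DEF_Zero : DEF (fun e => Zero (rowe 0 m e) (rowe m n e)).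
Proof.
apply: (DEF_ext (DEF_and (DEF_S dS) (DEF_all_fin (fun j : 'I_n => DEF_eq (TVar (m + j)) TZero)))).
by move=> e /=; split; case=> h1 h2; split => // j; move: (h2 j); rewrite mxE.
Qed.

Lemma DEF_Pd : DEF (fun e => Pd (rowe 0 m e) (rowe m n e)).
Proof.
have H := @DEF_P m S n (fun j => m + j)%N (m + n)%N ord0 dS
  (fun j => ltac:(by rewrite ltn_add2l)).
apply: (DEF_ext H) => e; rewrite /Pd.
have -> : @P_diag p K v m S n (rowe 0 m e) (rowe m n e) <->
   S (rowe 0 m e) /\ Pcond (fun j => rowe m n e 0 j) by [].
by rewrite (Pcond_ext (y' := fun j => rowe m n e 0 j)) // => j; rewrite mxE.
Qed.

Section Nz3.
Variable a : digs.
Hypothesis nza : nzd a.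

Lemma solve_eq (y xj xp : K) j :
  (a0 a)%:R * y + (a j)%:R * xp = (a0 a)%:R * xj + xp <-> y = xj + xp * cc a j.
Proof.
have [n0 _] := a0_unit nza.
have h := a0_cc nza j.
split => [e|->].
  apply: (mulfI n0); rewrite mulrDr mulrCA h.
  transitivity ((a0 a)%:R * y + (a j)%:R * xp - (a j)%:R * xp); first by ring.
  by rewrite e; ring.
by rewrite mulrDr mulrCA h; ring.
Qed.

Definition eqt (yp xp : nat) (j : 'I_n) : formula :=
  FEq (TAdd (TMul (tnat (a0 a)) (TVar yp)) (TMul (tnat (a j)) (TVar (m + piv a))))
      (TAdd (TMul (tnat (a0 a)) (TVar xp)) (TVar (m + piv a))).

Lemma eqtE (e : nat -> K) yp xp j :
  sat v e (eqt yp xp j) <-> e yp = e xp + e (m + piv a) * cc a j.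
Proof. by rewrite /eqt /= !tnatE solve_eq. Qed.

Lemma DEF_eqt yp xp j : DEF (fun e => e yp = e xp + e (m + piv a) * cc a j).
Proof. by exists (eqt yp xp j) => e; rewrite eqtE. Qed.

Lemma DEF_W b : (m + n <= b)%N -> DEF (fun e => W a (rowe 0 m e) (rowe m n e)).
Proof.
move=> hb.
have H1 := @DEF_P m S n (fun j => b + j)%N (b + n)%N ord0 dS
  (fun j => ltac:(by rewrite ltn_add2l)).
have H2 := DEF_and H1 (DEF_all_fin (fun j : 'I_n => DEF_eqt (b + j) (m + j) j)).
apply: (DEF_ext (DEF_exF b n H2)) => e.
have lt1 : forall j : 'I_n, (m + j < b)%N.
  by move=> j; apply: leq_trans hb; rewrite ltn_add2l.
have ltp := lt1 (piv a).
rewrite /W /Pd.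
have -> : @P_diag p K v m S n (rowe 0 m e) (phi a (rowe m n e)) <->
   S (rowe 0 m e) /\ Pcond (fun j => phi a (rowe m n e) 0 j) by [].
split.
  case=> y [[hs hP] heq]; rewrite rowe_updF ?add0n in hs; last by apply: leq_trans hb; rewrite leq_addr.
  split => //; apply: (Pcond_extP hP) => j; move: (heq j).
  by rewrite updF_in // !updF_lt // phiE !mxE.
case=> hs hP.
exists (fun i => phi a (rowe m n e) 0 (inord (i - b))); split; first split.
- by rewrite rowe_updF // add0n; apply: leq_trans hb; rewrite leq_addr.
- by apply: (Pcond_extP hP) => j; rewrite updF_in // addKn inord_val.
- move=> j; rewrite updF_in // !updF_lt // addKn inord_val.
  by rewrite phiE !mxE.
Qed.

End Nz3.

Lemma DEF_U l b : (m + n <= b)%N -> (forall a, List.In a l -> nzd a) ->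
  DEF (fun e => U l (rowe 0 m e) (rowe m n e)).
Proof.
move=> hb hl.
have H : forall a : digs, DEF (fun e => nzd a /\ W a (rowe 0 m e) (rowe m n e)).
  move=> a; case: (boolP (nzd a)) => na.
    by apply: (DEF_ext (DEF_W na hb)) => e; split => // [[]].
  by apply: (DEF_ext DEF_False) => e; split => // [[h _]].
apply: (DEF_ext (DEF_ex_list l H)) => e; split.
  by case=> x [hx [_ hw]]; exists x.
by case=> x [hx hw]; exists x; split => //; split => //; apply: hl.
Qed.

Lemma rowe_sub4 a b (z : 'rV[K]_((a + b) + (a + b))) :
  [/\ lsubmx (lsubmx z) = rowe 0 a (env_of z), rsubmx (lsubmx z) = rowe a b (env_of z),
      lsubmx (rsubmx z) = rowe (a + b) a (env_of z) &
      rsubmx (rsubmx z) = rowe (a + b + a) b (env_of z)].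
Proof.
split; apply/rowP => j; rewrite !mxE.
- by rewrite -(env_of_ord z (lshift _ (lshift _ j))).
- by rewrite -(env_of_ord z (lshift _ (rshift _ j))).
- by rewrite -(env_of_ord z (rshift _ (lshift _ j))).
- rewrite -(env_of_ord z (rshift _ (rshift _ j))); congr (env_of z _).
  by rewrite /= addnA.
Qed.

Lemma def_graph a : nzd a ->
  definable v (fun z : 'rV[K]_((m + n) + (m + n)) =>
     W a (lsubmx (lsubmx z)) (rsubmx (lsubmx z)) /\
     lsubmx (rsubmx z) = lsubmx (lsubmx z) /\
     rsubmx (rsubmx z) = phi a (rsubmx (lsubmx z))).
Proof.
move=> na.
have hb : (m + n <= m + n + m + n)%N by rewrite -addnA leq_addr.
have H := DEF_and (DEF_W na hb) (DEF_and
  (DEF_all_fin (fun i : 'I_m => DEF_eq (TVar (m + n + i)) (TVar i)))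
  (DEF_all_fin (fun j : 'I_n => DEF_eqt na (m + n + m + j) (m + j) j))).
case: H => f Hf; exists f => z; rewrite -Hf.
case: (rowe_sub4 z) => -> -> -> ->.
set e := env_of z; split.
  case=> h1 [h2 h3]; split => //; split.
    by move=> i /=; move/rowP: h2 => /(_ i); rewrite !mxE add0n.
  by move=> j; move/rowP: h3 => /(_ j); rewrite phiE !mxE.
case=> h1 [h2 h3]; split => //; split.
  by apply/rowP => i; rewrite !mxE add0n; apply: h2.
by apply/rowP => j; rewrite phiE !mxE h3.
Qed.

Local Notation adm := (admissible p v S).

Lemma adm_Zk k : (0 < k)%N -> adm (@Zk k).
Proof.
move=> k0; split.
- exact: definable2_DEF (DEF_Zk k).
- by move=> s x [].
- by move=> s _; apply: fin_meas_O k0 _ => x [_ h].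
Qed.

Lemma adm_Zero : adm Zero.
Proof.
split.
- exact: definable2_DEF DEF_Zero.
- by move=> s x [].
- by move=> s _; apply: fin_meas_O (ltn0Sn _) _ => x [_ h] j; rewrite h; left.
Qed.

Lemma Pd_O s x : Pd s x -> forall j, vge (x 0 j) 0.
Proof.
case=> _ [hac [lam hl]] j; right; rewrite hl //.
Qed.

Lemma adm_Pd : adm Pd.
Proof.
split.
- exact: definable2_DEF DEF_Pd.
- by move=> s x [].
- by move=> s _; apply: fin_meas_O (ltn0Sn _) _ => x; apply: Pd_O.
Qed.

Lemma adm_W a : nzd a -> adm (W a).
Proof.
move=> na; split.
- exact: definable2_DEF (DEF_W na (leqnn _)).
- by move=> s x [].
- move=> s _; apply: fin_meas_O (ltn0Sn _) _ => x hw.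
  by have [_ [lam hd]] := W_Dig na hw; apply: dig_O hd.
Qed.

Lemma adm_U l : (forall a, List.In a l -> nzd a) -> adm (U l).
Proof.
move=> hl; split.
- exact: definable2_DEF (DEF_U (leqnn _) hl).
- by move=> s x [a [ha [hs _]]].
- move=> s _; apply: fin_meas_O (ltn0Sn _) _ => x [a [ha hw]].
  by have [_ [lam hd]] := W_Dig (hl a ha) hw; apply: dig_O hd.
Qed.

Lemma timesZp_Zk k s (z : 'rV[K]_(k + 1)) : timesZp v (@Zk k) s z <-> @Zk (k + 1) s z.
Proof.
split.
  case=> [[hs h1] h2]; split => // j; case: (splitP j) => [i ei|i ei].
    by move: (h1 i); rewrite mxE; congr (vge (z 0 _) 0); apply: val_inj.
  move: h2; rewrite mxE; congr (vge (z 0 _) 0); apply: val_inj; rewrite /= ei.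
  by case: i {ei} => [[|i'] hi].
case=> hs h; split; first split => //.
  by move=> i; rewrite mxE; apply: h.
by rewrite mxE; apply: h.
Qed.

Lemma step_Zk k : (0 < k)%N ->
  Req S (delta (mkgen (@Zk k))) (delta (mkgen (@Zk (k + 1)))).
Proof.
move=> k0; have := Req_R4 (adm_Zk k0).
by rewrite (mkgen_ext (@timesZp_Zk k)).
Qed.

Lemma chain j : Req S (delta (mkgen (@Zk 1))) (delta (mkgen (@Zk j.+1))).
Proof.
elim: j => [|j IH]; first exact: Req_refl.
apply: (Req_trans IH); have := @step_Zk j.+1 isT.
by rewrite addn1.
Qed.

Lemma U_sum l : uniq l -> (forall a, List.In a l -> nzd a) ->
  Req S (delta (mkgen (U l))) (fun g => \sum_(a <- l) delta (mkgen (W a)) g).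
Proof.
elim: l => [|a l IH] ul hl.
  have hz : forall s x, U [::] s x -> forall j, x 0 j = 0 by move=> s x [b [[]]].
  have h := Req_R2 (adm_U hl) (fun s _ => dim_lt_zero (ltn0Sn _) (hz s)).
  by apply: (Req_ext h) => // g; rewrite big_nil.
move: ul => /= /andP [nal ul].
have hl' : forall b, List.In b l -> nzd b by move=> b hb; apply: hl; right.
have na : nzd a by apply: hl; left.
have h1 := Req_R1 (adm_W na) (adm_U hl') (fun s x => disj_W_U na hl'
   (fun H => (negP nal) (introT (In_inP_tmp _ _) H))) (@U_cons a l).
apply: (Req_trans h1); apply: Req_ext (Req_add (Req_refl _ (delta (mkgen (W a)))) (IH ul hl')) _ _ => // g.
by rewrite big_cons.
Qed.

Lemma W_P a : nzd a -> Req S (delta (mkgen (W a))) (delta (mkgen Pd)).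
Proof.
move=> na; apply: (Req_R3 (phi := fun _ => phi a) (adm_W na) adm_Pd (def_graph na)).
move=> s hs; split.
- split.
    move=> x hx; have [e He] := Pd_open hx; exists e => y hy; apply: He.
    exact: phi_ball.
  by move=> x hx; apply: Pd_open.
- by move=> x hx.
- by move=> x y _ _; apply: phi_inj.
- by move=> y hy; exists (psi a y); rewrite /W phi_psi.
- exact: C1_phi.
Qed.

Lemma Req_sum_in (l : seq digs) (F G : digs -> gen K m -> int) :
  (forall i, List.In i l -> Req S (F i) (G i)) ->
  Req S (fun g => \sum_(i <- l) F i g) (fun g => \sum_(i <- l) G i g).
Proof.
elim: l => [|i l IH] h.
  by apply: Req_ext (Req_refl _ (fun _ => 0)) _ _ => g; rewrite big_nil.
apply: Req_ext (Req_add (h i (or_introl erefl)) (IH (fun j hj => h j (or_intror hj)))) _ _;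
  by move=> g; rewrite big_cons.
Qed.

Lemma main_eq : Req S (fun g => ((p ^ n)%:Z - 1) * delta (mkgen Pd) g) (RS_one v S).
Proof.
have e1 : Req S (fun g => ((p ^ n)%:Z - 1) * delta (mkgen Pd) g)
                (fun g => \sum_(a <- L) delta (mkgen Pd) g).
  apply: Req_ext (Req_refl _ _) _ _ => // g.
  rewrite big_const_seq count_predT L_size iter_addr_0 -mulr_natl.
  by congr (_ * _); rewrite -subn1 natrB ?expn_gt0 ?prime_gt0 // natz.
have e2 := Req_sym (Req_sum_in (fun a ha => W_P (L_nzd ha))).
have e3 := Req_sym (U_sum (enum_uniq _) L_nzd).
have e4 := Req_R1 adm_Zero (adm_U L_nzd) (@disj_Zero_U) (@partition).
have hz : forall s x, Zero s x -> forall j, x 0 j = 0 by move=> s x [].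
have e5 := Req_R2 adm_Zero (fun s _ => dim_lt_zero (ltn0Sn _) (hz s)).
have e6 : Req S (delta (mkgen (U L))) (delta (mkgen (@Zk n))).
  apply: Req_sym; apply: (Req_trans e4).
  by apply: Req_ext (Req_add e5 (Req_refl _ (delta (mkgen (U L))))) _ _ => // g; rewrite add0r.
have e7 := Req_sym (chain n').
apply: (Req_trans e1).
apply: (Req_trans e2).
apply: (Req_trans e3).
apply: (Req_trans e6).
apply: Req_ext e7 _ _ => // g.
rewrite /RS_one; congr (delta _ g); apply: mkgen_ext => s x; rewrite /Zk.
split; case=> hs h; split => //.
by move=> j; rewrite ord1.
Qed.
End Main.
End Val.

Unset Implicit Arguments.

Theorem mainTheorem4 (p : nat) (K : fieldType) (v : K -> int) (m : nat)
    (S : 'rV[K]_m -> Prop) (n : nat) :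
  prime p -> is_Qp p v -> definable v S -> (0 < n)%N ->
  RS_eq p v S
    (fun g => ((p ^ n)%:Z - 1) * delta (mkgen (@P_diag p K v m S n)) g)
    (RS_one v S).
Proof.
move=> pp HQ dS; case: n => // n' _.
exact: (@main_eq p K v pp HQ m S dS n').
Qed.
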